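(* Let $u,v\in\mathbb{R}^n$ be nonzero and $A=uv^T$. Then $A$ is a Karamardian matrix if and only if $u$ is unisigned (i.e. $u\ge 0$ or $u\le 0$ entrywise) and $u^Tv>0$.
   Context: For $A\in\mathbb{R}^{n\times n}$ let $R(A)$, $N(A^T)$ denote the range of $A$ and null space of $A^T$, let $K_A=\mathbb{R}^n_+\cap R(A)$ and $K_A^*=\{y\in\mathbb{R}^n: x^Ty\ge 0 \text{ for all } x\in K_A\}$ (one has $K_A^*=\mathbb{R}^n_++N(A^T)$, and its interior is $\{a+b: a>0,\ b\in N(A^T)\}$). For $q\in\mathbb{R}^n$, the problem LCP$(A,K_A,q)$ is to find $x$ with $x\in K_A$, $Ax+q\in K_A^*$ and $x^T(Ax+q)=0$. $A$ is called a Karamardian matrix if $K_A\ne\{0\}$ and there exists $d$ in the interior of $K_A^*$ such that both LCP$(A,K_A,0)$ and LCP$(A,K_A,d)$ have $x=0$ as their only solution. *)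

(* Defs.v *)
From HB Require Import structures.
From mathcomp Require Import all_boot all_order all_algebra.
From mathcomp Require Import reals.
Set Implicit Arguments. Unset Strict Implicit. Unset Printing Implicit Defensive.
Import Order.TTheory GRing.Theory Num.Theory.
Local Open Scope ring_scope.

Section Defs.
Variables (R : realType) (n : nat).

Definition in_range (A : 'M[R]_n) (x : 'cV[R]_n) : Prop :=
  exists y : 'cV[R]_n, x = A *m y.

Definition in_nullT (A : 'M[R]_n) (b : 'cV[R]_n) : Prop := A^T *m b = 0.

Definition KA (A : 'M[R]_n) (x : 'cV[R]_n) : Prop :=
  (forall i, 0 <= x i 0) /\ in_range A x.

Definition KA_dual (A : 'M[R]_n) (y : 'cV[R]_n) : Prop :=
  forall x, KA A x -> 0 <= (x^T *m y) 0 0.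

(* interior of K_A^*, as described in the paper: {a + b : a > 0, b in N(A^T)} *)
Definition KA_dual_int (A : 'M[R]_n) (d : 'cV[R]_n) : Prop :=
  exists a b : 'cV[R]_n, (forall i, 0 < a i 0) /\ in_nullT A b /\ d = a + b.

Definition LCP_sol (A : 'M[R]_n) (q x : 'cV[R]_n) : Prop :=
  KA A x /\ KA_dual A (A *m x + q) /\ (x^T *m (A *m x + q)) 0 0 = 0.

Definition karamardian (A : 'M[R]_n) : Prop :=
  (exists x, KA A x /\ x <> 0) /\
  exists d, KA_dual_int A d /\
    (forall x, LCP_sol A 0 x -> x = 0) /\
    (forall x, LCP_sol A d x -> x = 0).

Definition unisigned (u : 'cV[R]_n) : Prop :=
  (forall i, 0 <= u i 0) \/ (forall i, u i 0 <= 0).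

End Defs.

(* Main.v *)
Require Import Defs.
From HB Require Import structures.
From mathcomp Require Import all_boot all_order all_algebra.
From mathcomp Require Import reals.
From mathcomp Require Import lra.
Import Order.TTheory GRing.Theory Num.Theory.
Local Open Scope ring_scope.
Set Implicit Arguments. Unset Strict Implicit.

Definition dp {R : realType} {n : nat} (p q : 'cV[R]_n) : R := (p^T *m q) 0 0.

Lemma dpE (R : realType) (n : nat) (p q : 'cV[R]_n) :
  dp p q = \sum_i p i 0 * q i 0.
Proof. by rewrite /dp mxE; apply: eq_bigr => i _; rewrite mxE. Qed.

Lemma dpC (R : realType) (n : nat) (p q : 'cV[R]_n) : dp p q = dp q p.
Proof. by rewrite !dpE; apply: eq_bigr => i _; rewrite mulrC. Qed.

Lemma dpZr (R : realType) (n : nat) (p q : 'cV[R]_n) c : dp p (c *: q) = c * dp p q.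
Proof. by rewrite !dpE mulr_sumr; apply: eq_bigr => i _; rewrite mxE mulrCA. Qed.

Lemma dpZl (R : realType) (n : nat) (p q : 'cV[R]_n) c : dp (c *: p) q = c * dp p q.
Proof. by rewrite dpC dpZr dpC. Qed.

Lemma dpDr (R : realType) (n : nat) (p q r : 'cV[R]_n) : dp p (q + r) = dp p q + dp p r.
Proof. by rewrite !dpE -big_split; apply: eq_bigr => i _; rewrite mxE mulrDr. Qed.

Lemma dp0r (R : realType) (n : nat) (p : 'cV[R]_n) : dp p 0 = 0.
Proof. by rewrite dpE big1 // => i _; rewrite mxE mulr0. Qed.

Lemma mulA (R : realType) (n : nat) (u v y : 'cV[R]_n) :
  (u *m v^T) *m y = dp v y *: u.
Proof.
rewrite -mulmxA; apply/matrixP => i j; rewrite ord1 !mxE big_ord1 mulrC.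
by rewrite /dp.
Qed.

Lemma dp_ge0 (R : realType) (n : nat) (p q : 'cV[R]_n) :
  (forall i, 0 <= p i 0) -> (forall i, 0 <= q i 0) -> 0 <= dp p q.
Proof. by move=> hp hq; rewrite dpE sumr_ge0 // => i _; rewrite mulr_ge0. Qed.

Lemma dp_gt0 (R : realType) (n : nat) (p q : 'cV[R]_n) i0 :
  (forall i, 0 <= p i 0) -> 0 < p i0 0 -> (forall i, 0 < q i 0) -> 0 < dp p q.
Proof.
move=> hp hi hq; rewrite dpE (bigD1 i0) //= ltr_wpDr ?mulr_gt0 //.
by rewrite sumr_ge0 // => i _; rewrite mulr_ge0 // ltW.
Qed.

Lemma nz_entry (R : realType) (n : nat) (p : 'cV[R]_n) :
  p != 0 -> exists i, p i 0 != 0.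
Proof.
move=> hp; case: (pickP (fun i => p i 0 != 0)) => [i hi|hn]; first by exists i.
move/eqP: hp; case; apply/matrixP => i j; rewrite ord1 mxE.
by move: (hn i) => /negbFE /eqP.
Qed.

Lemma dpp_gt0 (R : realType) (n : nat) (p : 'cV[R]_n) : p != 0 -> 0 < dp p p.
Proof.
move=> /nz_entry [i hi]; rewrite dpE (bigD1 i) //= ltr_pwDl //.
  by rewrite -expr2 exprn_even_gt0.
by rewrite sumr_ge0 // => k _; rewrite -expr2 sqr_ge0.
Qed.

Lemma KA_char (R : realType) (n : nat) (u v w : 'cV[R]_n) (s : R) i0 :
  v != 0 -> s * s = 1 -> u = s *: w -> (forall i, 0 <= w i 0) -> 0 < w i0 0 ->
  forall x, KA (u *m v^T) x <-> exists2 c, 0 <= c & x = c *: w.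
Proof.
move=> hv hs hu hw hi0 x; split.
  move=> [hx [y hy]]; rewrite mulA in hy.
  exists (dp v y * s); last by rewrite hy hu scalerA.
  move: (hx i0); rewrite hy hu !mxE => h.
  have : 0 <= (dp v y * s) * w i0 0 by rewrite -mulrA.
  move=> h'; nra.
move=> [c hc ->]; split.
  by move=> i; rewrite mxE mulr_ge0.
have hvv : dp v v != 0 by rewrite gt_eqF // dpp_gt0.
exists ((c * s / dp v v) *: v); rewrite mulA dpZr divfK // hu !scalerA.
by rewrite -mulrA hs mulr1.
Qed.

Lemma main_w (R : realType) (n : nat) (u v w : 'cV[R]_n) (s : R) i0 :
  u != 0 -> v != 0 -> s * s = 1 -> u = s *: w -> (forall i, 0 <= w i 0) -> 0 < w i0 0 ->
  karamardian (u *m v^T) <-> 0 < dp u v.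
Proof.
move=> hu0 hv hs hu hw hi0.
have char := KA_char hv hs hu hw hi0.
have hwu : w = s *: u by rewrite hu scalerA hs scale1r.
have hK : dp v w * dp w u = dp u v * dp u u.
  by rewrite hwu dpZr dpZl mulrACA hs mul1r dpC.
have huu := dpp_gt0 hu0.
have hw0 : w <> 0 by move=> h; move: hi0; rewrite h mxE ltxx.
have hAx : forall c, u *m v^T *m (c *: w) = (c * dp v w) *: u.
  by move=> c; rewrite mulA dpZr.
split.
- move=> [_ [d [[a [b [ha [hb ->]]]] [h0 hd]]]].
  rewrite ltNge; apply/negP; rewrite le_eqVlt => /orP [/eqP hs0 | hslt].
  + have hvw : dp v w = 0 by rewrite hwu dpZr dpC hs0 mulr0.
    apply: hw0; apply: h0; split; first by apply/char; exists 1; rewrite ?scale1r.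
    have -> : u *m v^T *m w + 0 = 0 by rewrite mulA hvw scale0r addr0.
    split; last by rewrite mulmx0 mxE.
    by move=> z _; rewrite mulmx0 mxE.
  + have hub : dp u b = 0.
      move: hb; rewrite /in_nullT trmx_mul trmxK mulA => /eqP.
      by rewrite scalemx_eq0 (negbTE hv) orbF => /eqP.
    set D := dp w (a + b).
    have hD : 0 < D by rewrite /D dpDr {2}hwu dpZl hub mulr0 addr0 (dp_gt0 hw hi0 ha).
    set K := dp v w * dp w u.
    have hKlt : K < 0 by rewrite /K hK; nra.
    set c := D / (- K).
    have hc : 0 < c by rewrite /c divr_gt0 // oppr_gt0.
    have hkey : dp w (u *m v^T *m (c *: w) + (a + b)) = 0.
      rewrite dpDr hAx dpZr -/D /c -mulrA -/K mulrC mulrA.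
      by rewrite invrN mulrN mulrAC divff ?lt_eqF // mul1r addNr.
    have : c *: w = 0.
      apply: hd; split; first by apply/char; exists c => //; exact: ltW.
      split; last by rewrite -/(dp _ _) dpZl hkey mulr0.
      move=> z /char [c' hc' ->]; rewrite -/(dp _ _) dpZl hkey mulr0 //.
    move=> /matrixP /(_ i0 0); rewrite !mxE => h.
    by move: (mulr_gt0 hc hi0); rewrite h ltxx.
- move=> hpos.
  have hKp : 0 < dp v w * dp w u by rewrite hK mulr_gt0.
  split; first by exists w; split => //; apply/char; exists 1; rewrite ?scale1r.
  exists (const_mx 1); split.
    exists (const_mx 1), 0; split; first by move=> i; rewrite mxE ltr01.
    by split; rewrite ?addr0 // /in_nullT mulmx0.
  split.
  + move=> x [/char [c hc ->] [_ hx]].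
    move: hx; rewrite -/(dp _ _) addr0 hAx dpZl dpZr => /eqP.
    rewrite mulrA mulrA -(mulrA (c * c)) mulf_eq0 (gt_eqF hKp) orbF.
    by rewrite mulf_eq0 orbb => /eqP ->; rewrite scale0r.
  + move=> x [/char [c hc ->] [_ hx]].
    have hd : 0 < dp w (const_mx 1).
      by apply: (dp_gt0 hw hi0) => i; rewrite mxE ltr01.
    move: hx; rewrite -/(dp _ _) dpZl dpDr hAx dpZr => /eqP.
    rewrite mulf_eq0 => /orP [/eqP -> |]; first by rewrite scale0r.
    rewrite gt_eqF //; rewrite mulrAC; nra.
Qed.

Lemma uni_w (R : realType) (n : nat) (u : 'cV[R]_n) :
  u != 0 -> unisigned u ->
  exists s w i0, [/\ s * s = 1, u = s *: w, (forall i, 0 <= w i 0) & 0 < w i0 0].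
Proof.
move=> /nz_entry [i0 hi0] [h|h].
  exists 1, u, i0; split; rewrite ?mulr1 ?scale1r //.
  by rewrite lt0r hi0 h.
exists (-1), (- u), i0; split; rewrite ?mulrNN ?mulr1 ?scaleN1r ?opprK //.
  by move=> i; rewrite mxE oppr_ge0.
by rewrite mxE oppr_gt0 lt_neqAle hi0 h.
Qed.

Lemma KA_uni (R : realType) (n : nat) (u v : 'cV[R]_n) :
  (exists x, KA (u *m v^T) x /\ x <> 0) -> unisigned u.
Proof.
move=> [x [[hx [y hy]] hx0]]; rewrite mulA in hy.
set t := dp v y in hy.
have ht : t != 0 by apply/eqP => h; apply: hx0; rewrite hy h scale0r.
have hxi : forall i, 0 <= t * u i 0 by move=> i; move: (hx i); rewrite hy mxE.
case: (ltrgtP t 0) ht => // htl _.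
  by right => i; move: (hxi i) => h; nra.
by left => i; move: (hxi i) => h; nra.
Qed.

Theorem mainTheorem6 (R : realType) (n : nat) (u v : 'cV[R]_n) :
  u != 0 -> v != 0 ->
  karamardian (u *m v^T) <-> (unisigned u /\ 0 < (u^T *m v) 0 0).
Proof.
move=> hu hv.
have key : unisigned u -> (karamardian (u *m v^T) <-> 0 < dp u v).
  move=> hun; have [s [w [i0 [hs hsw hw hi0]]]] := uni_w hu hun.
  exact: (main_w hu hv hs hsw hw hi0).
split.
  move=> hk; have hun := KA_uni (proj1 hk).
  by split => //; apply/(key hun).
by move=> [hun hp]; apply/(key hun).
Qed.
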